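(* There is an absolute constant $C>0$ such that the following holds. Let $k\ge1$, $\mathcal{R}>0$, and let $(\lambda_i,u_i),(\lambda_i',u_i')\in\mathbb{R}\times\mathbb{S}^{d-1}$ for $i\in[k]$ with $\sum_i|\lambda_i|\le\mathcal{R}$ and $\sum_i|\lambda_i'|\le\mathcal{R}$. Let $f_{\vec\lambda,\vec u}(x)=\sum_{i=1}^k\lambda_i\mathrm{ReLU}(\langle u_i,x\rangle)$ and similarly $f_{\vec\lambda',\vec u'}$. Then $$\|f_{\vec\lambda,\vec u}-f_{\vec\lambda',\vec u'}\|_2\le C\,k\max(1,\mathcal{R})\cdot d_{\mathsf{param}}\big((\vec\lambda,\vec u),(\vec\lambda',\vec u')\big).$$
   Context: $\mathrm{ReLU}(a)=\max(0,a)$. For $f:\mathbb{R}^d\to\mathbb{R}$, $\|f\|_2^2=\mathbb{E}_{x\sim\mathcal{N}(0,I_d)}[f(x)^2]$. The parameter distance is $d_{\mathsf{param}}((\vec\lambda,\vec u),(\vec\lambda',\vec u'))=\min_\pi\max_{i\in[k]}\{|\lambda_i-\lambda'_{\pi(i)}|+\|u_i-u'_{\pi(i)}\|\}$, the minimum over permutations $\pi$ of $[k]$, with $\|\cdot\|$ the Euclidean norm. *)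

(* Defs.v *)
From HB Require Import structures.
From mathcomp Require Import all_boot all_order all_algebra all_fingroup.
From mathcomp Require Import all_classical all_reals all_analysis.
Set Implicit Arguments. Unset Strict Implicit. Unset Printing Implicit Defensive.
Import Order.TTheory GRing.Theory Num.Theory.
Local Open Scope ring_scope.

Section Defs.
Context {R : realType}.

Definition relu (a : R) : R := Num.max 0 a.

Definition dotv (d : nat) (u x : 'rV[R]_d) : R := \sum_(j < d) u ord0 j * x ord0 j.
Definition enorm (d : nat) (u : 'rV[R]_d) : R := Num.sqrt (dotv u u).

(* Iterated Gaussian integral: coordinate n (0-based) of the argument is
   integrated against the standard normal N(0,1) on R, for n < d.
   For nonnegative integrands this is (by Tonelli) the expectation
   under N(0, I_d). *)
Fixpoint gauss_iter (n : nat) (g : (nat -> R) -> \bar R) : \bar R :=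
  match n with
  | 0 => g (fun _ => 0)
  | n'.+1 => (\int[normal_prob 0 1]_t
                gauss_iter n' (fun x => g (fun i => if i == n' then t else x i)))%E
  end.

Definition gauss_sq_exp (d : nat) (f : 'rV[R]_d -> R) : \bar R :=
  gauss_iter d (fun x => ((f (\row_(j < d) x j)) ^+ 2)%:E).

Definition L2norm (d : nat) (f : 'rV[R]_d -> R) : \bar R :=
  match gauss_sq_exp f with
  | EFin r => (Num.sqrt r)%:E
  | _ => +oo%E
  end.

Definition relu_net (k d : nat) (lam : 'I_k -> R) (u : 'I_k -> 'rV[R]_d)
  (x : 'rV[R]_d) : R :=
  \sum_(i < k) lam i * relu (dotv (u i) x).

Definition dperm (k d : nat) (lam lam' : 'I_k -> R) (u u' : 'I_k -> 'rV[R]_d)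
  (s : 'S_k) : R :=
  \big[Num.max/0]_(i < k) (`|lam i - lam' (s i)| + enorm (u i - u' (s i))).

(* d_param = min over permutations (seeded with the identity permutation,
   which is itself in the range, so this is exactly the minimum) *)
Definition dparam (k d : nat) (lam lam' : 'I_k -> R) (u u' : 'I_k -> 'rV[R]_d) : R :=
  \big[Num.min/dperm lam lam' u u' 1%g]_(s : 'S_k) dperm lam lam' u u' s.

End Defs.

(* Main.v *)
Require Import Defs.
From HB Require Import structures.
From mathcomp Require Import all_boot all_order all_algebra all_fingroup.
From mathcomp Require Import all_classical all_reals all_analysis.
From mathcomp Require Import measurable_realfun.
From mathcomp Require Import ring lra.
Import Order.TTheory GRing.Theory Num.Theory.
Import numFieldTopology.Exports numFieldNormedType.Exports.
Local Open Scope ring_scope.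
Local Open Scope classical_set_scope.

Section S.
Context {R : realType}.
Local Notation leb := (@lebesgue_measure R).

Lemma normal_density (f : R -> \bar R) : (forall x, 0 <= f x)%E ->
  measurable_fun [set: R] f ->
  (\int[normal_prob (0:R) 1]_x f x = \int[leb]_x (f x * (normal_pdf 0 1 x)%:E))%E.
Proof.
move=> f0 mf.
have dom := normal_prob_dominates (0:R) 1.
rewrite -(Radon_Nikodym_SigmaFinite.change_of_variables dom) //.
apply: ae_eq_integral => //.
- apply: emeasurable_funM => //.
  exact: measurable_int (Radon_Nikodym_SigmaFinite.f_integrable dom).
- apply: emeasurable_funM => //; apply/measurable_EFinP.
  exact: measurable_normal_pdf.
apply: ae_eqe_mul2l.
apply: integral_ae_eq => //.
- exact: Radon_Nikodym_SigmaFinite.f_integrable.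
- by apply/measurable_EFinP; exact: measurable_normal_pdf.
move=> E _ mE.
by rewrite -Radon_Nikodym_SigmaFinite.f_integral.
Qed.

Lemma leb_split (G : R -> R) : (forall x, 0 <= G x) -> continuous G ->
  (\int[leb]_x (G x)%:E = \int[leb]_(x in [set x : R | (0 <= x)%R]) (G x)%:E
     + \int[leb]_(x in [set x : R | (0 <= x)%R]) (G (- x))%:E)%E.
Proof.
move=> G0 cG.
have mG : measurable_fun [set: R] G by exact: continuous_measurable_fun.
have mpos : measurable [set x : R | (0 <= x)%R] by rewrite -set_itvcy.
rewrite -(setUv [set x : R | (0 <= x)%R]) ge0_integral_setU//=; last 4 first.
  exact: measurableC.
  by apply/measurable_EFinP; rewrite setUv.
  by move=> x _; rewrite lee_fin.
  exact/disj_setPCl.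
congr (_ + _)%E.
rewrite -set_itvcy setCitvr.
rewrite integral_itv_bndo_bndc; last exact/measurable_EFinP/measurable_funTS.
rewrite -{1}oppr0 ge0_integration_by_substitutionNy//.
exact: continuous_subspaceT.
Qed.

Lemma leb_refl (h : R -> R) : (forall x, 0 <= h x) -> continuous h ->
  (\int[leb]_x (h (- x))%:E = \int[leb]_x (h x)%:E)%E.
Proof.
move=> h0 ch.
have chN : continuous (fun x => h (- x)).
  move=> x; apply: continuous_comp; last exact: ch.
  exact: opp_continuous.
rewrite (@leb_split h h0 ch) (@leb_split (fun x => h (- x)) (fun x => h0 (- x)) chN) addeC.
by congr (_ + _)%E; apply: eq_integral => x _; rewrite opprK.
Qed.

Lemma pdfN (x : R) : normal_pdf 0 1 (- x) = normal_pdf 0 1 x.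
Proof. by rewrite /normal_pdf oner_eq0 /normal_fun !subr0 sqrrN. Qed.

Lemma pdf_expand (x : R) (s : R) : s != 0 ->
  normal_pdf 0 s x = normal_peak s * expR (- x ^+ 2 / (s ^+ 2 *+ 2)).
Proof. by move=> s0; rewrite /normal_pdf (negbTE s0) /normal_fun subr0. Qed.

Definition Kc : R := 8 * normal_peak 1 / normal_peak 2.

Lemma Kc_ge0 : 0 <= Kc.
Proof. by rewrite /Kc divr_ge0 ?mulr_ge0 ?normal_peak_ge0. Qed.

Lemma sq_pdf_le (t : R) : t ^+ 2 * normal_pdf 0 1 t <= Kc * normal_pdf 0 2 t.
Proof.
rewrite !pdf_expand ?oner_eq0 ?pnatr_eq0 //.
set a := t ^+ 2 / 8.
have a0 : 0 <= a by rewrite divr_ge0 ?sqr_ge0.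
have e1 : - t ^+ 2 / (1 ^+ 2 *+ 2) = - a + - (3 * a).
  by rewrite /a expr1n; field.
have e2 : - t ^+ 2 / (2 ^+ 2 *+ 2) = - a.
  by rewrite /a; field.
rewrite e1 e2 expRD.
have p2 : 0 < normal_peak (2 : R) by rewrite normal_peak_gt0 ?pnatr_eq0.
have h : t ^+ 2 * expR (- (3 * a)) <= 8.
  have H : 3 * a <= expR (3 * a).
    by apply: le_trans (expR_ge1Dx _); lra.
  have ea : 0 < expR (3 * a) by exact: expR_gt0.
  have -> : t ^+ 2 = 8 * a by rewrite /a; field.
  rewrite expRN ler_pdivrMr //; lra.
have -> : Kc * (normal_peak 2 * expR (- a)) = 8 * (normal_peak 1 * expR (- a)).
  by rewrite /Kc; field; rewrite gt_eqF.
have -> : t ^+ 2 * (normal_peak 1 * (expR (- a) * expR (- (3 * a)))) =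
  (t ^+ 2 * expR (- (3 * a))) * (normal_peak 1 * expR (- a)) by ring.
by apply: ler_wpM2r => //; rewrite mulr_ge0 ?normal_peak_ge0 ?expR_ge0.
Qed.
Lemma N_refl (g : R -> R) : (forall x, 0 <= g x) -> continuous g ->
  (\int[normal_prob (0:R) 1]_x (g (- x))%:E = \int[normal_prob (0:R) 1]_x (g x)%:E)%E.
Proof.
move=> g0 cg.
have cgN : continuous (fun x => g (- x)).
  move=> x; apply: continuous_comp; last exact: cg.
  exact: opp_continuous.
rewrite (@normal_density (fun x => (g (- x))%:E)); first last.
- by apply/measurable_EFinP; exact: continuous_measurable_fun.
- by move=> x; rewrite lee_fin.
rewrite (@normal_density (fun x => (g x)%:E)); first last.
- by apply/measurable_EFinP; exact: continuous_measurable_fun.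
- by move=> x; rewrite lee_fin.
have ch : continuous (fun y => g y * normal_pdf 0 1 y).
  move=> x; apply: cvgM; first exact: cg.
  by apply: continuous_normal_pdf; rewrite oner_eq0.
have h0 : forall y, 0 <= g y * normal_pdf 0 1 y.
  by move=> y; rewrite mulr_ge0 ?normal_pdf_ge0.
transitivity (\int[leb]_x ((fun y => g y * normal_pdf 0 1 y) (- x))%:E)%E.
  by apply: eq_integral => x _; rewrite /= pdfN EFinM.
rewrite (@leb_refl (fun y => g y * normal_pdf 0 1 y) h0 ch).
by apply: eq_integral => x _; rewrite EFinM.
Qed.

Lemma N_sq : (\int[normal_prob (0:R) 1]_x (x ^+ 2)%:E <= Kc%:E)%E.
Proof.
have mx2 : measurable_fun [set: R] (fun x : R => x ^+ 2) by [].
rewrite normal_density //; first last.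
- by apply/measurable_EFinP.
- by move=> x; rewrite lee_fin sqr_ge0.
apply: (@le_trans _ _ (\int[leb]_x (Kc%:E * (normal_pdf 0 2 x)%:E))%E).
  apply: ge0_le_integral => //.
  - by move=> x _; rewrite -EFinM lee_fin mulr_ge0 ?sqr_ge0 ?normal_pdf_ge0.
  - apply: emeasurable_funM; first exact/measurable_EFinP.
    by apply/measurable_EFinP; exact: measurable_normal_pdf.
  - apply: emeasurable_funM => //.
    by apply/measurable_EFinP; exact: measurable_normal_pdf.
  - by move=> x _; rewrite -!EFinM lee_fin sq_pdf_le.
rewrite ge0_integralZl_EFin //; last 3 first.
- by move=> x _; rewrite lee_fin normal_pdf_ge0.
- by apply/measurable_EFinP; exact: measurable_normal_pdf.
- exact: Kc_ge0.
by rewrite integral_normal_pdf mule1.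
Qed.
Lemma N_aff (a b : R) : 0 <= a -> 0 <= b ->
  (\int[normal_prob (0:R) 1]_x (a + b * x ^+ 2)%:E <= (a + b * Kc)%:E)%E.
Proof.
move=> a0 b0.
have mx2 : measurable_fun [set: R] (fun x : R => x ^+ 2) by [].
under eq_integral do rewrite EFinD EFinM.
rewrite ge0_integralD //; try (by move=> x _; rewrite -?EFinM lee_fin ?mulr_ge0 ?sqr_ge0);
  try (by apply: emeasurable_funM => //; apply/measurable_EFinP).
have N1 : normal_prob (0:R) 1 [set: R] = 1%E.
  by rewrite /normal_prob integral_normal_pdf.
rewrite integral_cst //= N1 mule1.
rewrite ge0_integralZl_EFin //; last 2 first.
- by move=> x _; rewrite lee_fin sqr_ge0.
- by apply/measurable_EFinP.
rewrite EFinD EFinM; apply: leeD2l; apply: lee_wpmul2l; first by rewrite lee_fin.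
exact: N_sq.
by move=> x _; rewrite -EFinM lee_fin mulr_ge0 ?sqr_ge0.
Qed.
Lemma N_quad (A B C : R) : 0 <= C -> (forall t, 0 <= A + B * t + C * t ^+ 2) ->
  (\int[normal_prob (0:R) 1]_t (A + B * t + C * t ^+ 2)%:E <= (A + C * Kc)%:E)%E.
Proof.
move=> C0 q0.
set q := fun t : R => A + B * t + C * t ^+ 2.
have A0 : 0 <= A by have := q0 0; rewrite mulr0 expr0n /= mulr0 !addr0.
have cq : continuous q.
  move=> x; apply: cvgD; first apply: cvgD.
  - exact: cvg_cst.
  - by apply: cvgM; [exact: cvg_cst | exact: cvg_id].
  - by apply: cvgM; [exact: cvg_cst | exact: exprn_continuous].
have mq : measurable_fun [set: R] q by exact: continuous_measurable_fun.
have mqN : measurable_fun [set: R] (fun t => q (- t)).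
  apply: continuous_measurable_fun => x; apply: continuous_comp; last exact: cq.
  exact: opp_continuous.
have Iq0 : (0 <= \int[normal_prob (0:R) 1]_t (q t)%:E)%E.
  by apply: integral_ge0 => t _; rewrite lee_fin; exact: q0.
have H : (\int[normal_prob (0:R) 1]_t (q t)%:E + \int[normal_prob (0:R) 1]_t (q t)%:E
    <= (2 * A + 2 * C * Kc)%:E)%E.
  rewrite -{2}(@N_refl q q0 cq) -ge0_integralD //; first last.
  - by apply/measurable_EFinP.
  - by move=> t _; rewrite lee_fin; exact: q0.
  - by apply/measurable_EFinP.
  - by move=> t _; rewrite lee_fin; exact: q0.
  apply: (@le_trans _ _ (\int[normal_prob (0:R) 1]_t ((2 * A) + (2 * C) * t ^+ 2)%:E))%E; last first.
    by apply: N_aff; rewrite mulr_ge0.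
  rewrite le_eqVlt; apply/orP; left; apply/eqP.
  by apply: eq_integral => t _; rewrite -EFinD /q; congr EFin; ring.
move: Iq0 H; rewrite /q.
case: (\int[_]_t _)%E => [r| |] //= r0.
rewrite -EFinD !lee_fin => H; lra.
Qed.
Lemma int_mono (f g : R -> \bar R) : (forall x, 0 <= f x)%E -> (forall x, f x <= g x)%E ->
  (\int[normal_prob (0:R) 1]_x f x <= \int[normal_prob (0:R) 1]_x g x)%E.
Proof.
move=> f0 fg.
have g0 : forall x, (0 <= g x)%E by move=> x; exact: le_trans (f0 x) (fg x).
rewrite ge0_integralE; last by move=> x _; exact: f0.
rewrite [leRHS]ge0_integralE; last by move=> x _; exact: g0.
apply: le_ereal_sup => _ [h hf <-]; exists h => //= x.
apply: le_trans (hf x) _.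
rewrite /patch; case: ifP => _ //; exact: fg.
Qed.
Lemma gi_ge0 n (g : (nat -> R) -> \bar R) : (forall x, 0 <= g x)%E ->
  (0 <= gauss_iter n g)%E.
Proof.
elim: n g => [|n IH] g g0 /=; first exact: g0.
by apply: integral_ge0 => t _; apply: IH => x; exact: g0.
Qed.

Lemma gi_mono n (g1 g2 : (nat -> R) -> \bar R) : (forall x, 0 <= g1 x)%E ->
  (forall x, g1 x <= g2 x)%E -> (gauss_iter n g1 <= gauss_iter n g2)%E.
Proof.
elim: n g1 g2 => [|n IH] g1 g2 h0 h12 /=; first exact: h12.
apply: int_mono => t.
- by apply: gi_ge0 => x; exact: h0.
- by apply: IH => x; [exact: h0 | exact: h12].
Qed.

Lemma quad_id (I : finType) (c v T : I -> R) (t : R) :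
  \sum_l ((c l + v l * t) ^+ 2 + T l) =
  (\sum_l (c l ^+ 2 + T l)) + (\sum_l (2 * c l * v l)) * t + (\sum_l v l ^+ 2) * t ^+ 2.
Proof.
rewrite !mulr_suml -!big_split /=; apply: eq_bigr => l _; ring.
Qed.

Lemma gi_bound n (I : finType) (c : I -> R) (w : I -> nat -> R) :
  (gauss_iter n (fun x => (\sum_l (c l + \sum_(j < n) w l j * x j) ^+ 2)%:E)
   <= (\sum_l (c l ^+ 2 + Kc * \sum_(j < n) w l j ^+ 2))%:E)%E.
Proof.
elim: n c => [|n IH] c /=.
  rewrite lee_fin; apply: ler_sum => l _; rewrite !big_ord0 addr0 mulr0 addr0 //.
set S := fun l => Kc * \sum_(j < n) w l j ^+ 2.
have S0 : forall l, 0 <= S l by move=> l; rewrite mulr_ge0 ?Kc_ge0 ?sumr_ge0 // => j _; rewrite sqr_ge0.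
apply: (@le_trans _ _ (\int[normal_prob (0:R) 1]_t
   (\sum_l ((c l + w l n * t) ^+ 2 + S l))%:E))%E.
  apply: int_mono => t.
    by apply: gi_ge0 => x; rewrite lee_fin sumr_ge0 // => l _; rewrite sqr_ge0.
  set F := (fun x : nat -> R => _).
  have -> : F = (fun x => (\sum_l ((c l + w l n * t) + \sum_(j < n) w l j * x j) ^+ 2)%:E).
    apply: funext => x; rewrite /F; congr EFin; apply: eq_bigr => l _.
    rewrite big_ord_recr /= eqxx.
    rewrite (eq_bigr (fun j : 'I_n => w l j * x j)); last first.
      by move=> j _ /=; rewrite ltn_eqF.
    congr (_ ^+ 2); ring.
  exact: IH.
under eq_integral do rewrite quad_id.
apply: le_trans.
  apply: N_quad.
  - by rewrite sumr_ge0 // => l _; rewrite sqr_ge0.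
  - move=> t; rewrite -quad_id sumr_ge0 // => l _.
    by rewrite addr_ge0 ?sqr_ge0.
rewrite lee_fin le_eqVlt; apply/orP; left; apply/eqP.
rewrite mulr_suml -big_split /=; apply: eq_bigr => l _.
by rewrite big_ord_recr /= /S; ring.
Qed.
Lemma le_bigmax0 (k : nat) (F : 'I_k -> R) i : F i <= \big[Num.max/0]_(j < k) F j.
Proof.
rewrite unlock /reducebig.
have : i \in index_enum 'I_k := mem_index_enum i.
elim: (index_enum 'I_k) => //= a r IH.
rewrite in_cons => /orP [/eqP <- | /IH h]; rewrite le_max ?lexx //.
by rewrite h orbT.
Qed.

Lemma relu_abs (a : R) : `|relu a| <= `|a|.
Proof.
rewrite /relu /Order.max; case: (ltP 0 a) => ha //.
by rewrite normr0.
Qed.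

Lemma relu_lip (a b : R) : `|relu a - relu b| <= `|a - b|.
Proof.
have h1 := ler_norm (a - b).
have h2 : - (a - b) <= `|a - b| by rewrite -normrN ler_norm.
rewrite ler_norml /relu /Order.max.
by case: (ltP 0 a) => ha; case: (ltP 0 b) => hb; apply/andP; split; lra.
Qed.

Lemma term_bound (l m a b : R) :
  `|l * relu a - m * relu b| <= `|l - m| * `|a| + `|m| * `|a - b|.
Proof.
have -> : l * relu a - m * relu b = (l - m) * relu a + m * (relu a - relu b) by ring.
apply: le_trans (ler_normD _ _) _; rewrite !normrM.
apply: lerD; apply: ler_wpM2l => //; [exact: relu_abs | exact: relu_lip].
Qed.

Lemma cs_sum (k : nat) (z : 'I_k -> R) :
  (\sum_(i < k) z i) ^+ 2 <= k%:R * \sum_(i < k) z i ^+ 2.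
Proof.
have e1 : (\sum_(i < k) z i) ^+ 2 = \sum_(i < k) \sum_(j < k) z i * z j.
  by rewrite expr2 mulr_suml; apply: eq_bigr => i _; rewrite mulr_sumr.
have e2 : k%:R * \sum_(i < k) z i ^+ 2 = \sum_(i < k) \sum_(j < k) z i ^+ 2.
  rewrite mulr_sumr; apply: eq_bigr => i _.
  by rewrite sumr_const card_ord mulr_natl.
have e3 : k%:R * \sum_(i < k) z i ^+ 2 = \sum_(i < k) \sum_(j < k) z j ^+ 2.
  by rewrite e2 exchange_big.
have : 0 <= \sum_(i < k) \sum_(j < k) (z i - z j) ^+ 2.
  by apply: sumr_ge0 => i _; apply: sumr_ge0 => j _; rewrite sqr_ge0.
have -> : \sum_(i < k) \sum_(j < k) (z i - z j) ^+ 2 =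
   \sum_(i < k) \sum_(j < k) z i ^+ 2 + \sum_(i < k) \sum_(j < k) z j ^+ 2
   - 2 * \sum_(i < k) \sum_(j < k) z i * z j.
  rewrite mulr_sumr -big_split -sumrB /=; apply: eq_bigr => i _.
  rewrite mulr_sumr -big_split -sumrB /=; apply: eq_bigr => j _; ring.
rewrite -e1 -e2 -e3; lra.
Qed.

Lemma dotvB (d : nat) (u v x : 'rV[R]_d) : dotv (u - v) x = dotv u x - dotv v x.
Proof.
by rewrite /dotv -sumrB; apply: eq_bigr => j _; rewrite !mxE; ring.
Qed.

Lemma single_le_sum (k : nat) (F : 'I_k -> R) i : (forall j, 0 <= F j) ->
  F i <= \sum_j F j.
Proof.
move=> F0; rewrite (bigD1 i) //= lerDl; apply: sumr_ge0 => j _; exact: F0.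
Qed.
Lemma sq_le (a b : R) : 0 <= a -> a <= b -> a ^+ 2 <= b ^+ 2.
Proof. by move=> a0 ab; rewrite !expr2 ler_pM. Qed.

Lemma dotv_sq (d : nat) (v : 'rV[R]_d) : dotv v v = enorm v ^+ 2.
Proof.
rewrite /enorm sqr_sqrtr // /dotv.
by apply: sumr_ge0 => j _; rewrite -expr2 sqr_ge0.
Qed.

Lemma pair_sum (k : nat) (F : ('I_k * bool)%type -> R) :
  \sum_p F p = \sum_(i < k) (F (i, true) + F (i, false)).
Proof.
transitivity (\sum_(i < k) \sum_(b : bool) F (i, b)); last first.
  by apply: eq_bigr => i _; rewrite big_bool.
by rewrite pair_bigA; apply: eq_bigr => -[i b].
Qed.

Lemma two_sq (k X Y : R) : 0 <= k ->
  k * (X + Y) ^+ 2 <= 2 * k * X ^+ 2 + 2 * k * Y ^+ 2.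
Proof.
move=> k0.
have h : 2 * k * X ^+ 2 + 2 * k * Y ^+ 2 - k * (X + Y) ^+ 2 = k * (X - Y) ^+ 2 by ring.
have := mulr_ge0 k0 (sqr_ge0 (X - Y)); lra.
Qed.
End S.

Theorem lemmaA2 (R : realType) :
  exists C : R, 0 < C /\
  forall (k d : nat) (Rb : R) (lam lam' : 'I_k -> R) (u u' : 'I_k -> 'rV[R]_d),
    (1 <= k)%N -> 0 < Rb ->
    (forall i, enorm (u i) = 1) -> (forall i, enorm (u' i) = 1) ->
    \sum_(i < k) `|lam i| <= Rb -> \sum_(i < k) `|lam' i| <= Rb ->
    (L2norm (fun x => (relu_net lam u x - relu_net lam' u' x)%R)
      <= (C * k%:R * Num.max 1 Rb * dparam lam lam' u u')%:E)%E.
Proof.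
have Kc0 := @Kc_ge0 R.
exists (2 * Num.sqrt (Kc + 1)); split.
  by rewrite mulr_gt0 // sqrtr_gt0; lra.
move=> k d Rb lam lam' u u' hk hR hu hu' hl hl'.
set C := 2 * Num.sqrt (Kc + 1).
set M := Num.max 1 Rb.
have M1 : 1 <= M by rewrite /M le_max lexx.
have MR : Rb <= M by rewrite /M le_max lexx orbT.
have C0 : 0 <= C by rewrite mulr_ge0 // sqrtr_ge0.
have CC : C ^+ 2 = 4 * (Kc + 1) by rewrite exprMn sqr_sqrtr; [ring | lra].
pose i0 : 'I_k := Ordinal hk.
case: d u u' hu hu' => [|d] u u' hu hu'.
  exfalso; have := hu i0; rewrite /enorm /dotv big_ord0 sqrtr0 => /eqP.
  by rewrite eq_sym oner_eq0.
have main : forall s : 'S_k, (L2norm (fun x => (relu_net lam u x - relu_net lam' u' x)%R)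
    <= (C * k%:R * M * dperm lam lam' u u' s)%:E)%E.
  move=> s.
  set D := dperm lam lam' u u' s.
  set al := fun i => `|lam i - lam' (s i)|.
  set be := fun i => `|lam' (s i)|.
  set Dl := fun i => u i - u' (s i).
  have hD : forall i, al i + enorm (Dl i) <= D.
    move=> i; rewrite /D /dperm /al /Dl; apply: le_bigmax0.
  have en0 : forall i, 0 <= enorm (Dl i) by move=> i; exact: sqrtr_ge0.
  have al0 : forall i, 0 <= al i by move=> i; exact: normr_ge0.
  have be0 : forall i, 0 <= be i by move=> i; exact: normr_ge0.
  have alD : forall i, al i <= D by move=> i; have := hD i; have := en0 i; lra.
  have eD : forall i, enorm (Dl i) <= D by move=> i; have := hD i; have := al0 i; lra.
  have D0 : 0 <= D by apply: le_trans (alD i0).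
  have sumbe : \sum_i be i <= Rb.
    apply: le_trans hl'; rewrite le_eqVlt; apply/orP; left; apply/eqP.
    by symmetry; exact: (reindex_inj (@perm_inj _ s)).
  have be_le : forall i, be i <= Rb.
    by move=> i; apply: le_trans sumbe; exact: single_le_sum.
  have sumbe2 : \sum_i be i ^+ 2 <= Rb ^+ 2.
    apply: (@le_trans _ _ (\sum_i be i * Rb)).
      by apply: ler_sum => i _; rewrite expr2; apply: ler_wpM2l.
    by rewrite -mulr_suml expr2; apply: ler_wpM2r => //; exact: ltW.
  pose sq : R := Num.sqrt (2 * k%:R).
  have sq2 : sq ^+ 2 = 2 * k%:R by rewrite sqr_sqrtr // mulr_ge0.
  pose w : ('I_k * bool)%type -> nat -> R := fun p j =>
    if p.2 then sq * al p.1 * u p.1 ord0 (inord j)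
    else sq * be p.1 * Dl p.1 ord0 (inord j).
  have hlin : forall (c : R) (v : 'rV[R]_d.+1) (x : nat -> R),
      \sum_(j < d.+1) c * v ord0 (inord j) * x j = c * dotv v (\row_(j < d.+1) x j).
    move=> c v x; rewrite /dotv mulr_sumr; apply: eq_bigr => j _.
    by rewrite inord_val mxE mulrA.
  have PB : forall x : nat -> R,
     (relu_net lam u (\row_(j < d.+1) x j) - relu_net lam' u' (\row_(j < d.+1) x j)) ^+ 2
     <= \sum_p (0 + \sum_(j < d.+1) w p j * x j) ^+ 2.
    move=> x; rewrite pair_sum /w /=.
    under eq_bigr => i _ do rewrite !add0r !hlin.
    set rx := \row_(j < d.+1) x j.
    set a := fun i => dotv (u i) rx.
    set c := fun i => dotv (Dl i) rx.
    set z := fun i => al i * `|a i| + be i * `|c i|.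
    have HF : relu_net lam u rx - relu_net lam' u' rx =
        \sum_i (lam i * relu (a i) - lam' (s i) * relu (dotv (u' (s i)) rx)).
      rewrite /relu_net sumrB; congr (_ - _).
      exact: (reindex_inj (@perm_inj _ s)).
    have Fz : `|relu_net lam u rx - relu_net lam' u' rx| <= \sum_i z i.
      rewrite HF; apply: le_trans (ler_norm_sum _ _ _) _.
      apply: ler_sum => i _; rewrite /z /c /Dl dotvB; exact: term_bound.
    apply: (@le_trans _ _ ((\sum_i z i) ^+ 2)).
      rewrite -real_normK ?num_real //; apply: sq_le Fz; exact: normr_ge0.
    apply: (le_trans (cs_sum _ z)).
    rewrite mulr_sumr; apply: ler_sum => i _.
    have -> : (sq * al i * a i) ^+ 2 = 2 * k%:R * (al i * `|a i|) ^+ 2.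
      by rewrite !exprMn sq2 !real_normK ?num_real //; ring.
    have -> : (sq * be i * c i) ^+ 2 = 2 * k%:R * (be i * `|c i|) ^+ 2.
      by rewrite !exprMn sq2 !real_normK ?num_real //; ring.
    exact: two_sq.
  have G : (gauss_sq_exp (fun x => (relu_net lam u x - relu_net lam' u' x)%R)
      <= (\sum_p ((fun=> 0) p ^+ 2 + Kc * \sum_(j < d.+1) w p j ^+ 2))%:E)%E.
    apply: le_trans (gi_bound d.+1 _ (fun=> 0) w).
    apply: gi_mono => x; first by rewrite lee_fin sqr_ge0.
    by rewrite lee_fin; exact: PB.
  have hq : forall (c : R) (v : 'rV[R]_d.+1),
      \sum_(j < d.+1) (c * v ord0 (inord j)) ^+ 2 = c ^+ 2 * enorm v ^+ 2.
    move=> c v; rewrite -dotv_sq /dotv mulr_sumr; apply: eq_bigr => j _.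
    by rewrite inord_val exprMn expr2.
  have hu1 : forall i, enorm (u i) ^+ 2 = 1 by move=> i; rewrite hu expr1n.
  have Gb : \sum_p ((fun=> (0:R)) p ^+ 2 + Kc * \sum_(j < d.+1) w p j ^+ 2) =
      Kc * (2 * k%:R) * \sum_i (al i ^+ 2 + be i ^+ 2 * enorm (Dl i) ^+ 2).
    rewrite pair_sum mulr_sumr; apply: eq_bigr => i _; rewrite /w /=.
    rewrite !hq hu1 !exprMn sq2 expr0n /=; ring.
  have Bb : \sum_i (al i ^+ 2 + be i ^+ 2 * enorm (Dl i) ^+ 2)
      <= k%:R * D ^+ 2 + Rb ^+ 2 * D ^+ 2.
    rewrite big_split /=; apply: lerD.
      apply: (@le_trans _ _ (\sum_(i < k) D ^+ 2)).
        by apply: ler_sum => i _; apply: sq_le.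
      by rewrite sumr_const card_ord mulr_natl.
    apply: (@le_trans _ _ (\sum_i be i ^+ 2 * D ^+ 2)).
      apply: ler_sum => i _; apply: ler_wpM2l; first exact: sqr_ge0.
      by apply: sq_le.
    by rewrite -mulr_suml; apply: ler_wpM2r => //; exact: sqr_ge0.
  have k1 : 1 <= k%:R :> R by rewrite ler1n.
  have Fin : Kc * (2 * k%:R) * (k%:R * D ^+ 2 + Rb ^+ 2 * D ^+ 2)
      <= (C * k%:R * M * D) ^+ 2.
    have e : (C * k%:R * M * D) ^+ 2 = 4 * (Kc + 1) * k%:R * (k%:R * M ^+ 2 * D ^+ 2).
      transitivity (C ^+ 2 * (k%:R ^+ 2 * M ^+ 2 * D ^+ 2)); first ring.
      by rewrite CC; ring.
    rewrite e.
    have hM2 : 1 <= M ^+ 2 by rewrite -(expr1n _ 2); apply: sq_le.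
    have hR2 : Rb ^+ 2 <= M ^+ 2 by apply: sq_le => //; exact: ltW.
    have kM : k%:R * D ^+ 2 + Rb ^+ 2 * D ^+ 2 <= 2 * (k%:R * M ^+ 2 * D ^+ 2).
      have d2 := sqr_ge0 D.
      have h1 : k%:R * D ^+ 2 <= k%:R * M ^+ 2 * D ^+ 2.
        rewrite -mulrA ler_wpM2l ?ler0n //.
        by rewrite -[X in X <= _]mul1r ler_wpM2r.
      have h2 : Rb ^+ 2 * D ^+ 2 <= k%:R * M ^+ 2 * D ^+ 2.
        apply: ler_wpM2r => //; apply: le_trans hR2 _.
        by rewrite -[X in X <= _]mul1r ler_wpM2r // (le_trans _ hM2).
      lra.
    have P0 : 0 <= k%:R * M ^+ 2 * D ^+ 2.
      by apply: mulr_ge0; [apply: mulr_ge0; [exact: ler0n | exact: sqr_ge0] | exact: sqr_ge0].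
    have KK : 0 <= (@Kc R) * (2 * k%:R) by apply: mulr_ge0 => //; apply: mulr_ge0; exact: ler0n.
    apply: le_trans (ler_wpM2l KK kM) _.
    have -> : Kc * (2 * k%:R) * (2 * (k%:R * M ^+ 2 * D ^+ 2)) =
      (4 * Kc * k%:R) * (k%:R * M ^+ 2 * D ^+ 2) by ring.
    apply: ler_wpM2r => //.
    apply: ler_wpM2r; first by rewrite ler0n.
    lra.
  have G0 : (0 <= gauss_sq_exp (fun x => (relu_net lam u x - relu_net lam' u' x)%R))%E.
    by apply: gi_ge0 => x; rewrite lee_fin sqr_ge0.
  have T0 : 0 <= C * k%:R * M * D.
    by rewrite !mulr_ge0 ?ler0n //; lra.
  rewrite Gb in G.
  rewrite /L2norm; move: G G0.
  case: (gauss_sq_exp _) => [r| |] //= Hr r0.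
  rewrite lee_fin -(ger0_norm T0) -sqrtr_sqr ler_sqrt; last exact: sqr_ge0.
  rewrite lee_fin in Hr.
  apply: le_trans Hr _; apply: le_trans Fin.
  apply: ler_wpM2l; last exact: Bb.
  by rewrite mulr_ge0 // mulr_ge0.
rewrite /dparam.
apply: (big_ind (fun m => (L2norm _ <= (C * k%:R * M * m)%:E)%E)).
- exact: main.
- by move=> a b Ha Hb; rewrite /Order.min; case: ifP.
- by move=> s _; exact: main.
Qed.
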